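(* The number of unique configurations of length $n$ is $\Omega(2^n)$.
   Context: For a real sequence $A=(a_1,\dots,a_n)$, a configuration is a sequence $P=(p_1,\dots,p_n)$ with $p_\ell\in\{1,\dots,n-\ell+1\}$ for each $\ell$; $P$ is an output configuration for $A$ if for every $\ell=1,\dots,n$ the sum $a_{p_\ell}+\dots+a_{p_\ell+\ell-1}$ is maximum among all sums of $\ell$ consecutive entries of $A$. A configuration $P$ is unique if there exists $A\in\mathbb{R}^n$ whose only output configuration is $P$. *)

(* Defs.v *)
From HB Require Import structures.
From mathcomp Require Import all_boot all_order all_algebra.
From mathcomp Require Import reals.
Set Implicit Arguments. Unset Strict Implicit. Unset Printing Implicit Defensive.
Import Order.TTheory GRing.Theory Num.Theory.
Local Open Scope ring_scope.

(* Conventions (0-indexed): a sequence A = (a_1..a_n) is  a : 'I_n -> R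
   (a_{k+1} = a k).  A configuration is  P : {ffun 'I_n -> 'I_n}  where the
   entry at index i : 'I_n corresponds to length l = i+1 and P i is the
   0-indexed start position, i.e. p_l = P i + 1.  The range constraint
   p_l \in {1..n-l+1} becomes  P i + i < n. *)

Definition window (R : realType) (n : nat) (a : 'I_n -> R) (s l : nat) : R :=
  \sum_(k < n | (s <= k < s + l)%N) a k.

Definition is_config (n : nat) (P : {ffun 'I_n -> 'I_n}) : Prop :=
  forall i : 'I_n, (P i + i < n)%N.

Definition output_config (R : realType) (n : nat) (a : 'I_n -> R)
    (P : {ffun 'I_n -> 'I_n}) : Prop :=
  is_config P /\
  forall (i : 'I_n) (s : nat), (s + i < n)%N ->
    window a s i.+1 <= window a (P i) i.+1.

Definition unique_config (R : realType) (n : nat) (P : {ffun 'I_n -> 'I_n}) : Prop :=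
  is_config P /\
  exists a : 'I_n -> R, output_config a P /\
    forall Q : {ffun 'I_n -> 'I_n}, output_config a Q -> Q = P.

(* Main.v *)
Require Import Defs.
From HB Require Import structures.
From mathcomp Require Import all_boot all_order all_algebra.
From mathcomp Require Import reals.
From mathcomp Require Import zify.
Import Order.TTheory GRing.Theory Num.Theory.
Set Implicit Arguments. Unset Strict Implicit. Unset Printing Implicit Defensive.
Local Open Scope ring_scope.

Definition fb (m : nat) (d : {ffun 'I_m -> bool}) (j : nat) : bool :=
  if insub j is Some k then d k else false.

Definition sd (m : nat) (d : {ffun 'I_m -> bool}) (i : nat) : nat :=
  (\sum_(i <= j < m) fb d j)%N.

Lemma sS m (d : {ffun 'I_m -> bool}) j : sd d j = (fb d j + sd d j.+1)%N.
Proof.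
rewrite /sd; case: (ltnP j m) => h; first by rewrite big_ltn.
rewrite !big_geq //; last exact: leqW.
by rewrite /fb insubF // ltnNge h.
Qed.

Lemma s_mono m (d : {ffun 'I_m -> bool}) k i : (sd d (i + k) <= sd d i <= sd d (i + k) + k)%N.
Proof.
elim: k => [|k IH]; first by rewrite addn0 leqnn addn0 leqnn.
have := sS d (i + k); have := leq_b1 (fb d (i + k)).
rewrite addnS; move: IH; set b := fb d (i + k); set x := sd d (i + k).+1.
move: (nat_of_bool b) => bb; lia.
Qed.

Lemma s_mono2 m (d : {ffun 'I_m -> bool}) i j : (i <= j)%N -> (sd d j <= sd d i <= sd d j + (j - i))%N.
Proof. by move=> h; have := s_mono d (j - i) i; rewrite subnKC. Qed.

Lemma s_bound m (d : {ffun 'I_m -> bool}) i : (i <= m)%N -> (sd d i + i <= m)%N.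
Proof.
move=> h; have := s_mono2 d h; have -> : sd d m = 0%N by rewrite /sd big_geq.
lia.
Qed.

Definition J m (d : {ffun 'I_m -> bool}) (i k : nat) : bool := (sd (m:=m) d i <= k < sd d i + i.+1)%N.

Lemma J_all m (d : {ffun 'I_m -> bool}) k : (k < m.+1)%N -> J d m k.
Proof. by move=> h; rewrite /J /sd big_geq. Qed.

Lemma J_nest m (d : {ffun 'I_m -> bool}) i j k : (i <= j)%N -> J (m:=m) d i k -> J d j k.
Proof. rewrite /J => h; have := s_mono2 d h; lia. Qed.

Definition ee m (d : {ffun 'I_m -> bool}) (k : 'I_m.+1) : nat := ex_minn (ex_intro (J d ^~ k) m (J_all d (ltn_ord k))).

Lemma ee_le m (d : {ffun 'I_m -> bool}) i (k : 'I_m.+1) : J d i k -> (ee (m:=m) d k <= i)%N.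
Proof. rewrite /ee; case: ex_minnP => e _ H; exact: H. Qed.

Lemma ee_gt m (d : {ffun 'I_m -> bool}) i (k : 'I_m.+1) : ~~ J d i k -> (i < ee (m:=m) d k)%N.
Proof.
rewrite /ee; case: ex_minnP => e He _ hn; rewrite ltnNge; apply/negP => hle.
by move: hn; rewrite (J_nest hle He).
Qed.

Definition aa (R : realType) m (d : {ffun 'I_m -> bool}) : 'I_m.+1 -> R := fun k => - ((m.+2)%:R ^+ ee d k).

Definition Pof m (d : {ffun 'I_m -> bool}) : {ffun 'I_m.+1 -> 'I_m.+1} :=
  [ffun i : 'I_m.+1 => inord (sd d i)].

Lemma Pof_val m (d : {ffun 'I_m -> bool}) (i : 'I_m.+1) : (Pof d i : nat) = sd d i.
Proof.
rewrite ffunE inordK //; have := s_bound d (ltn_ord i : (i <= m)%N).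
lia.
Qed.

Lemma aa_le0 (R : realType) m (d : {ffun 'I_m -> bool}) (k : 'I_m.+1) : aa R (m:=m) d k <= 0.
Proof. by rewrite /aa oppr_le0 exprn_ge0 // ler0n. Qed.

Lemma aa_ge (R : realType) m (d : {ffun 'I_m -> bool}) i (k : 'I_m.+1) : J d i k -> - ((m.+2)%:R ^+ i) <= aa R (m:=m) d k.
Proof.
move=> h; rewrite /aa lerN2; apply: ler_weXn2l; first by rewrite ler1n.
exact: ee_le.
Qed.

Lemma aa_lt (R : realType) m (d : {ffun 'I_m -> bool}) i (k : 'I_m.+1) : ~~ J d i k -> aa R (m:=m) d k <= - ((m.+2)%:R ^+ i.+1).
Proof.
move=> h; rewrite /aa lerN2; apply: ler_weXn2l; first by rewrite ler1n.
exact: ee_gt.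
Qed.

Lemma win_lt (R : realType) m (d : {ffun 'I_m -> bool}) (i : 'I_m.+1) t : (t + i < m.+1)%N -> t != sd d i ->
  window (aa R d) t i.+1 < window (aa R d) (sd d i) i.+1.
Proof.
move=> ht hne.
set B : R := (m.+2)%:R.
have hB : 0 < B by rewrite ltr0n.
have lo : - (B ^+ i) *+ m.+1 <= window (aa R d) (sd d i) i.+1.
  have -> : - (B ^+ i) *+ m.+1 = \sum_(k < m.+1) (- (B ^+ i)).
    by rewrite sumr_const card_ord.
  rewrite /window [X in _ <= X]big_mkcond /=.
  apply: ler_sum => k _; case: ifP => hk.
    exact: (@aa_ge R m d i k hk).
  by rewrite oppr_le0 exprn_ge0 // ltW.
pose k0 : nat := if (t < sd d i)%N then t else (t + i)%N.
have hk0 : (k0 < m.+1)%N by rewrite /k0; case: ifP => _; lia.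
have hin : (t <= k0 < t + i.+1)%N by rewrite /k0; case: ifP => _; lia.
have hnJ : ~~ J d i k0.
  rewrite /J /k0; case: ifP => h1; lia.
have up : window (aa R d) t i.+1 <= - (B ^+ i.+1).
  rewrite /window (bigD1 (Ordinal hk0)) //=.
  rewrite -[X in _ <= X]addr0 lerD //; first exact: aa_lt.
  by apply: sumr_le0 => k _; exact: aa_le0.
apply: (le_lt_trans up); apply: (lt_le_trans _ lo).
rewrite -mulr_natr mulNr exprS ltrN2 [X in X < _]mulrC ltr_pM2r ?exprn_gt0 //.
by rewrite /B ltr_nat.
Qed.

Lemma Pof_unique (R : realType) m (d : {ffun 'I_m -> bool}) : unique_config R (Pof (m:=m) d).
Proof.
have cfg : is_config (Pof d).
  by move=> i; rewrite Pof_val; have := s_bound d (ltn_ord i : (i <= m)%N); lia.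
split=> //; exists (aa R d); split.
  split=> // i s hs; rewrite Pof_val.
  case: (eqVneq s (sd d i)) => [->//|hne].
  exact/ltW/win_lt.
move=> Q [cQ hQ]; apply/ffunP => i; apply/val_inj; rewrite /= Pof_val.
have hs : (sd d i + i < m.+1)%N by have := s_bound d (ltn_ord i : (i <= m)%N); lia.
have := hQ i (sd d i) hs.
case: (eqVneq (Q i : nat) (sd d i)) => // hne.
by rewrite leNgt (win_lt R (cQ i) hne).
Qed.

Theorem theorem3 (R : realType) :
  exists c : R, 0 < c /\ exists N : nat, forall n : nat, (N <= n)%N ->
    exists S : {set {ffun 'I_n -> 'I_n}},
      (forall P, P \in S -> unique_config R P) /\ c * 2 ^+ n <= #|S|%:R.
Proof.
exists (2^-1); split; first by rewrite invr_gt0 ltr0n.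
exists 1%N => -[//|m] _.
exists [set Pof d | d : {ffun 'I_m -> bool}]; split.
  by move=> P /imsetP [d _ ->]; exact: Pof_unique.
rewrite card_imset; last first.
  move=> d1 d2 /ffunP E.
  have Es : forall i, (i <= m)%N -> sd d1 i = sd d2 i.
    move=> i hi; have := congr1 val (E (inord i)).
    by rewrite /= !Pof_val !inordK.
  apply/ffunP => k.
  have h1 := sS d1 k; have h2 := sS d2 k.
  rewrite Es ?(ltnW (ltn_ord k)) // Es ?(ltn_ord k) // in h1.
  move: h1 h2; rewrite /fb valK.
  by case: (d1 k); case: (d2 k) => /=; lia.
rewrite ?cardsT card_ffun card_bool card_ord natrX exprS mulrA mulVf ?mul1r //.
by rewrite pnatr_eq0.
Qed.
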